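(* Let $\mathcal{A}$ be an associative unital algebra over $\mathbb{C}$ and let $B=(B_{ij})_{1\le i,j\le g}$ be a $g\times g$ matrix with entries in $\mathcal{A}$ such that entries in different rows commute: $[B_{ik},B_{jl}]=0$ whenever $i\neq j$ (for all $k,l$). Let $D\in\mathcal A$ be the determinant of $B$ and $\Delta_{ij}\in\mathcal A$ the signed cofactor of $B_{ij}$ (defined below). Assume $D$ is invertible in $\mathcal{A}$ and that $B$ is invertible in $\mathrm{Mat}_g(\mathcal{A})$. Then the inverse is given by $(B^{-1})_{ij}=D^{-1}\Delta_{ji}$, and elements in the same column of $B^{-1}$ commute: $$[(B^{-1})_{ir},(B^{-1})_{jr}]=0\qquad\text{for all } i,j,r\in\{1,\dots,g\}.$$ Equivalently, $\Delta_{ri}D^{-1}\Delta_{rj}=\Delta_{rj}D^{-1}\Delta_{ri}$ for all $i,j,r$.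
   Context: Because entries of $B$ lying in different rows commute, the determinant $D=\sum_{\sigma\in S_g}\mathrm{sgn}(\sigma)\,B_{1\sigma(1)}B_{2\sigma(2)}\cdots B_{g\sigma(g)}$ is independent of the order of the factors in each product. Likewise the cofactor $\Delta_{ij}$ is $(-1)^{i+j}$ times the determinant (defined the same way) of the $(g-1)\times(g-1)$ matrix obtained from $B$ by deleting row $i$ and column $j$; it is also well defined. *)

(* Defs.v *)
From HB Require Import structures.
From mathcomp Require Import all_boot all_order all_algebra all_fingroup.
From mathcomp Require Import complex.
From mathcomp Require Import Rstruct.
From Stdlib Require Import Reals.
Set Implicit Arguments.
Unset Strict Implicit.
Unset Printing Implicit Defensive.

Definition CC : fieldType := complex Rdefinitions.R.

(* Main.v *)
Require Import Defs.
From HB Require Import structures.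
From mathcomp Require Import all_boot all_order all_algebra all_fingroup.
Import GRing.Theory.
Local Open Scope ring_scope.

Lemma liftF n (i : 'I_n) b : (lift i b == i) = false.
Proof. by rewrite eq_sym (negbTE (neq_lift _ _)). Qed.

Section Aux.
Variable R : pzRingType.

Lemma prod_rem_comm (I : eqType) (s : seq I) (F : I -> R) x :
  x \in s -> (forall j, j \in s -> F x * F j = F j * F x) ->
  \prod_(i <- s) F i = F x * \prod_(i <- rem x s) F i.
Proof.
elim: s => [//|y s IH]; rewrite inE big_cons /=.
case: eqP => [-> _ _ /=| /eqP neq /= xs Hc]; first by rewrite eqxx.
rewrite eq_sym (negbTE neq) big_cons IH //; last by move=> j js; apply: Hc; rewrite inE js orbT.
by rewrite !mulrA Hc // inE eqxx.
Qed.

Lemma prod_perm_comm (I : eqType) (r1 r2 : seq I) (F : I -> R) :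
  (forall i j, i \in r1 -> j \in r1 -> F i * F j = F j * F i) ->
  perm_eq r1 r2 -> \prod_(i <- r1) F i = \prod_(i <- r2) F i.
Proof.
elim: r1 r2 => [|x r1 IH] r2 Hc Hp.
  by move: Hp; rewrite perm_sym => /perm_nilP ->.
have xr2 : x \in r2 by rewrite -(perm_mem Hp) inE eqxx.
have Hc2 : forall i j, i \in r2 -> j \in r2 -> F i * F j = F j * F i.
  by move=> i j; rewrite -!(perm_mem Hp); apply: Hc.
rewrite (@prod_rem_comm _ _ _ x xr2); last by move=> j jr; apply: Hc2.
rewrite big_cons; congr (_ * _); apply: IH.
  by move=> i j ir jr; apply: Hc; rewrite inE ?ir ?jr orbT.
by rewrite -(perm_cons x) (permPl Hp) perm_to_rem.
Qed.

Lemma comm_all (I : eqType) (F : I -> R) :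
  (forall a b, a != b -> F a * F b = F b * F a) -> forall a b, F a * F b = F b * F a.
Proof. by move=> H a b; case: (eqVneq a b) => [->|/H]. Qed.

Lemma prod_lift_comm n (i0 : 'I_n.+1) (F : 'I_n.+1 -> R) :
  (forall a b, a != b -> F a * F b = F b * F a) ->
  \prod_(k | i0 != k) F k = \prod_(k : 'I_n) F (lift i0 k).
Proof.
move=> /comm_all Hc.
rewrite -big_filter -(big_map (lift i0) xpredT F).
apply: prod_perm_comm; first by move=> *; apply: Hc.
apply: uniq_perm.
- by rewrite filter_uniq // index_enum_uniq.
- by rewrite map_inj_uniq ?index_enum_uniq //; apply: lift_inj.
move=> k; rewrite mem_filter mem_index_enum andbT.
case: (unliftP i0 k) => [k'|] ->.
  by rewrite neq_lift; apply/esym/mapP; exists k' => //; rewrite mem_index_enum.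
rewrite eqxx; apply/esym/mapP => [[k' _ /eqP]]; by rewrite (negbTE (neq_lift _ _)).
Qed.

Lemma prod_D1_comm (I : finType) (F : I -> R) j :
  (forall a, a != j -> F j * F a = F a * F j) ->
  \prod_(i : I) F i = (\prod_(i | j != i) F i) * F j.
Proof.
move=> Hc.
rewrite (@prod_rem_comm _ _ _ j) ?mem_index_enum //; last first.
  by move=> a _; case: (eqVneq a j) => [->|/Hc].
rewrite rem_filter ?index_enum_uniq // big_filter.
rewrite (eq_bigl (fun i => j != i)); last by move=> i; rewrite /= eq_sym.
apply: (commr_prod (index_enum I)) => i ji; apply: Hc; by rewrite eq_sym.
Qed.
End Aux.

Section Det.
Variable R : pzRingType.

Definition rc {n} (C : 'M[R]_n) :=
  forall i j k l, i != j -> C i k * C j l = C j l * C i k.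

Lemma expand_cofactor_rc n (A : 'M[R]_n) i j : rc A ->
  cofactor A i j =
    \sum_(s : 'S_n | s i == j) (-1) ^+ s * \prod_(k | i != k) A k (s k).
Proof.
case: n A i j => [|n] A i0 j0 HA; first by case: i0.
rewrite (reindex (lift_perm i0 j0)); last first.
  pose ulsf i (s : 'S_n.+1) k := odflt k (unlift (s i) (s (lift i k))).
  have ulsfK i (s : 'S_n.+1) k: lift (s i) (ulsf i s k) = s (lift i k).
    rewrite /ulsf; have:= neq_lift i k.
    by rewrite -(can_eq (permK s)) => /unlift_some[] ? ? ->.
  have inj_ulsf: injective (ulsf i0 _).
    move=> s; apply: can_inj (ulsf (s i0) s^-1%g) _ => k'.
    by rewrite {1}/ulsf ulsfK !permK liftK.
  exists (fun s => perm (inj_ulsf s)) => [s _ | s].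
    by apply/permP=> k'; rewrite permE /ulsf lift_perm_lift lift_perm_id liftK.
  move/(s _ =P _) => si0; apply/permP=> k.
  case: (unliftP i0 k) => [k'|] ->; rewrite ?lift_perm_id //.
  by rewrite lift_perm_lift -si0 permE ulsfK.
rewrite /cofactor big_distrr /=.
apply: eq_big => [s | s _]; first by rewrite lift_perm_id eqxx.
rewrite -signr_odd mulrA -signr_addb oddD -odd_lift_perm; congr (_ * _).
rewrite prod_lift_comm; last by move=> a b ab; apply: HA.
by apply: eq_bigr => k _; rewrite !mxE lift_perm_lift.
Qed.

Lemma expand_det_col_rc n (C : 'M[R]_n) j0 : rc C ->
  \det C = \sum_i cofactor C i j0 * C i j0.
Proof.
move=> HC.
rewrite /(\det C) (partition_big (fun s : 'S_n => (s^-1)%g j0) predT) //=.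
apply: eq_bigr => i0 _; rewrite expand_cofactor_rc // mulr_suml.
apply: eq_big => [s | s].
  by rewrite (canF_eq (permKV s)) eq_sym.
move=> /eqP Hs.
have Hs' : s i0 = j0 by rewrite -Hs permKV.
rewrite -mulrA; congr (_ * _).
rewrite (@prod_D1_comm _ _ _ i0) Hs' //.
by move=> a ai; rewrite -Hs'; apply: HC; rewrite eq_sym.
Qed.

Lemma prod0_seq (I : eqType) (s : seq I) (F : I -> R) x :
  x \in s -> F x = 0 -> \prod_(i <- s) F i = 0.
Proof.
elim: s => // a s IH; rewrite inE big_cons => /orP[/eqP <- -> | xs Fx].
  by rewrite mul0r.
by rewrite IH ?mulr0.
Qed.

Lemma det_zero_row n (C : 'M[R]_n) i : (forall k, C i k = 0) -> \det C = 0.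
Proof.
move=> H; apply: big1 => s _.
by rewrite (@prod0_seq _ _ _ i) ?mulr0 ?mem_index_enum.
Qed.

Lemma det_col_perm n (C : 'M[R]_n) (p : 'S_n) :
  \det (col_perm p C) = (-1) ^+ p * \det C.
Proof.
rewrite /(\det (col_perm p C)) /(\det C) big_distrr /=.
rewrite [RHS](reindex_inj (mulIg p)) /=.
apply: eq_bigr => s _.
rewrite odd_permM signr_addb mulrA.
have -> : (-1) ^+ p * ((-1) ^+ s * (-1) ^+ p) = (-1) ^+ s :> R.
  by rewrite -!signr_addb; case: (odd_perm p); case: (odd_perm s).
by congr (_ * _); apply: eq_bigr => k _; rewrite !mxE permM.
Qed.

Lemma det_eqcol n (C : 'M[R]_n) i1 i2 :
  i1 != i2 -> (forall a, C a i1 = C a i2) -> \det C = 0.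
Proof.
move=> neq HC; pose t := tperm i1 i2.
have oddMt s: (s * t)%g = ~~ s :> bool by rewrite odd_permM odd_tperm neq addbT.
rewrite [\det C](bigID (@odd_perm _)) /=.
apply: canLR (subrK _) _; rewrite add0r -sumrN.
rewrite (reindex_inj (mulIg t)); apply: eq_big => //= s.
move=> _; rewrite oddMt signrN mulNr; congr (- (_ * _)).
apply: eq_bigr => k _; rewrite permM /t.
case: tpermP => // ->; by rewrite HC.
Qed.

Lemma det_unit_row n (C : 'M[R]_n) r j : rc C ->
  (forall m, C r m = (m == j)%:R) -> \det C = cofactor C r j.
Proof.
move=> HC Hr; rewrite (@expand_det_col_rc _ _ j HC) (bigD1 r) //= Hr eqxx mulr1.
rewrite big1 ?addr0 // => s sr.
have [r' Er] : exists r', r = lift s r'.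
  by case: (unliftP s r) => [r' ->|Ers]; [exists r' | rewrite Ers eqxx in sr].
rewrite /cofactor (@det_zero_row _ _ r') ?mulr0 ?mul0r // => m.
by rewrite !mxE -Er Hr liftF.
Qed.
End Det.
Arguments rc {R n}.

Theorem mainTheorem2 (A : unitAlgType CC) (g : nat) (B : 'M[A]_g)
  (Hcomm : forall (i j k l : 'I_g), i != j -> B i k * B j l = B j l * B i k)
  (HD : \det B \is a GRing.unit)
  (Binv : 'M[A]_g) (HBl : B *m Binv = 1%:M) (HBr : Binv *m B = 1%:M) :
  (forall i j : 'I_g, Binv i j = (\det B)^-1 * cofactor B j i) /\
  (forall i j r : 'I_g, Binv i r * Binv j r = Binv j r * Binv i r) /\
  (forall i j r : 'I_g,
     cofactor B r i * (\det B)^-1 * cofactor B r j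
     = cofactor B r j * (\det B)^-1 * cofactor B r i).
Proof.
set D := \det B.
have adjB : \adj B *m B = D%:M.
  apply/matrixP => i l; rewrite !mxE.
  pose C := \matrix_(a, b) B a (if b == i then l else b) : 'M[A]_g.
  have HC : rc C by move=> a b k m ab; rewrite !mxE; apply: Hcomm.
  have cofC : forall k, cofactor C k i = cofactor B k i.
    move=> k; rewrite /cofactor; congr (_ * \det _); apply/matrixP => a b.
    by rewrite !mxE liftF.
  have -> : \sum_k \adj B i k * B k l = \det C.
    rewrite (@expand_det_col_rc _ _ _ i HC); apply: eq_bigr => k _.
    by rewrite cofC !mxE eqxx.
  case: (eqVneq i l) => [Eil|il].
    rewrite mulr1n /D /C -Eil; congr (\det _); apply/matrixP => a b; rewrite !mxE.
    by case: eqP => [->|].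
  rewrite mulr0n; apply: (@det_eqcol _ _ _ i l il) => a.
  by rewrite !mxE eqxx; case: eqP => [->|].
have Qe : Binv = D^-1 *: \adj B.
  have L : (D^-1 *: \adj B) *m B = 1%:M.
    by rewrite -scalemxAl adjB scale_scalar_mx mulVr.
  by rewrite -[LHS]mul1mx -L -mulmxA HBl mulmx1.
have P1 : forall i j : 'I_g, Binv i j = D^-1 * cofactor B j i.
  by move=> i j; rewrite Qe !mxE.
have P3 : forall i j r : 'I_g,
     cofactor B r i * D^-1 * cofactor B r j
     = cofactor B r j * D^-1 * cofactor B r i.
  move=> i j r; case: (eqVneq i j) => [->//|ij].
  have E : forall s, s != r -> \sum_k B s k * (D^-1 * cofactor B r k) = 0.
    move=> s sr; have := congr1 (fun M : 'M[A]_g => M s r) HBl.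
    rewrite !mxE (negbTE sr) /= => H0; apply: etrans _ H0; apply: eq_bigr => k _.
    by rewrite P1.
  pose H k := \matrix_(a, b) (if a == r then (b == j)%:R
                              else B a (if b == i then k else b)) : 'M[A]_g.
  have HH : forall k, rc (H k).
    move=> k a b m l ab; rewrite !mxE.
    case: (eqVneq a r) => [_|ar]; first by apply: esym; apply: commr_nat.
    case: (eqVneq b r) => [_|br]; first by apply: commr_nat.
    by apply: Hcomm.
  have cofH : forall k s, cofactor (H k) s i = cofactor (H i) s i.
    move=> k s; rewrite /cofactor; congr (_ * \det _); apply/matrixP => a b.
    by rewrite !mxE liftF.
  have S : \sum_k \det (H k) * (D^-1 * cofactor B r k) = 0.
    under eq_bigr => k _ do rewrite (@expand_det_col_rc _ _ _ i (HH k)) mulr_suml.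
    rewrite exchange_big /=; apply: big1 => s _.
    case: (eqVneq s r) => [->|sr].
      by apply: big1 => k _; rewrite !mxE eqxx (negbTE ij) mulr0 mul0r.
    under eq_bigr => k _ do rewrite cofH !mxE (negbTE sr) eqxx -mulrA.
    by rewrite -big_distrr /= E // mulr0.
  have Hk : forall k, k != i -> k != j -> \det (H k) = 0.
    move=> k ki kj; apply: (@det_eqcol _ _ _ i k); first by rewrite eq_sym.
    move=> a; rewrite !mxE eqxx (negbTE ij) (negbTE kj).
    by case: eqP => // _; case: eqP => [->|].
  have Hi : \det (H i) = cofactor B r j.
    rewrite (@det_unit_row _ _ _ r j (HH i)); last by move=> m; rewrite !mxE eqxx.
    rewrite /cofactor; congr (_ * \det _); apply/matrixP => a b.
    rewrite !mxE liftF.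
    by case: eqP => [->|].
  have Hj : \det (H j) = - cofactor B r i.
    pose t := tperm i j.
    have : \det (col_perm t (H j)) = cofactor B r i.
      rewrite (@det_unit_row _ _ _ r i); last 2 first.
      - by move=> a b m l ab; have := HH j a b (t m) (t l) ab; rewrite !mxE.
      - move=> m; rewrite !mxE eqxx /t.
        case: tpermP => [->|->|/eqP mi /eqP mj]; rewrite ?eqxx //.
          by rewrite (negbTE ij) eq_sym (negbTE ij).
        by rewrite (negbTE mi) (negbTE mj).
      rewrite /cofactor; congr (_ * \det _); apply/matrixP => a b.
      rewrite !mxE liftF /t.
      case: tpermP => [E1|->|/eqP mi /eqP mj].
      + by move: (neq_lift i b); rewrite E1 eqxx.
      + by rewrite eqxx.
      + by rewrite (negbTE mi).
    rewrite det_col_perm odd_tperm ij expr1 mulN1r => <-; by rewrite opprK.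
  move: S; rewrite (bigD1 i) // (bigD1 j) /=; last by rewrite eq_sym.
  rewrite big1; last by move=> k /andP[ki kj]; rewrite Hk ?mul0r.
  rewrite addr0 Hi Hj mulNr => /eqP; rewrite subr_eq0 => /eqP H0.
  by rewrite -(mulrA (cofactor B r i)) -(mulrA (cofactor B r j)) H0.
split => //; split => // i j r.
rewrite !P1 -!(mulrA (D^-1)) (mulrA (cofactor B r i)) (mulrA (cofactor B r j)).
by rewrite P3.
Qed.
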